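(* Let $\lambda>1$, $\mu>1$. Let $\widetilde G$ be the unique rational function for which there exist real $\tilde\beta,\tilde\alpha,\tilde a,\tilde b$ such that: $\widetilde G=P/Q$ with polynomials $\deg P=3$, $\deg Q=2$; $-1$ and $1$ are poles of $\widetilde G$; $\lim_{z\to\infty}\widetilde G(z)/z>0$; $\tilde\beta<-1<\tilde\alpha<\tilde a<1<\tilde b$; $\widetilde G'(\tilde\beta)=\widetilde G'(\tilde\alpha)=\widetilde G'(\tilde a)=\widetilde G'(\tilde b)=0$; $\widetilde G(\tilde\beta)=-\mu$, $\widetilde G(\tilde b)=\lambda$; $-\widetilde G(\tilde\alpha)=\widetilde G(\tilde a)=1$. Let $\widetilde H=c\,\widetilde G$ where $c>0$ is such that $\lim_{z\to\infty}\widetilde H(z)/z=1$. (i) The system $$ \begin{cases} 2\,(a+\alpha)(3-a\alpha-a-\alpha)(3-a\alpha+a+\alpha)+(\lambda-\mu)(a-\alpha)^3=0,\\ (\lambda+\mu)^2(a-\alpha)^6=4\,(3+a\alpha)^3(1-a\alpha)(2+a+\alpha)(2-a-\alpha) \end{cases} $$ has at least one solution $(\alpha,a)$ with $-1<\alpha<a<1$. (ii) Given any such solution, let $\beta<-1$ and $b>1$ be the solutions of $x^2+(a+\alpha)x+\frac{(a-\alpha)^2}{1-a\alpha}-3=0$, put $A=\frac14(1-\beta)(1-\alpha)(1-a)(1-b)$, $B=\frac14(1+\beta)(1+\alpha)(1+a)(1+b)$, $h=\frac14(a+\alpha)\big(2a\alpha-\frac{(a-\alpha)^2}{1-a\alpha}\big)$,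 $H(z)=h+z+\frac{Az}{1-z}+\frac{Bz}{1+z}$ and $G(z)=H(z)/H(a)$. Then $G=\widetilde G$ and $H=\widetilde H$. *)

(* Defs.v *)
From HB Require Import structures.
From mathcomp Require Import all_boot all_order all_algebra.
From mathcomp Require Import all_classical all_reals all_analysis.

Set Implicit Arguments.
Unset Strict Implicit.
Unset Printing Implicit Defensive.

Import Order.TTheory GRing.Theory Num.Theory.
Import numFieldNormedType.Exports.
Local Open Scope classical_set_scope.
Local Open Scope ring_scope.

Section Defs.
Variable R : realType.

Definition ratfun_PQ (P Q : {poly R}) (G : R -> R) : Prop :=
  [/\ size P = 4%N, size Q = 3%N, coprimep P Q &
      forall x, ~~ root Q x -> G x = P.[x] / Q.[x]].

Definition Gtilde_prop (lam mu : R) (G : R -> R) : Prop :=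
  exists P Q : {poly R},
    [/\ ratfun_PQ P Q G,
        root Q (-1) /\ root Q 1,
        (exists l : R, 0 < l /\
           (fun z => G z / z) @ +oo%R --> l /\ (fun z => G z / z) @ -oo%R --> l) &
        exists bt al at_ bt' : R,
          [/\ bt < -1, -1 < al, al < at_, at_ < 1 & 1 < bt'] /\
          [/\ is_derive bt (1:R) G 0, is_derive al (1:R) G 0,
              is_derive at_ (1:R) G 0 & is_derive bt' (1:R) G 0] /\
          [/\ G bt = - mu, G bt' = lam, - G al = 1 & G at_ = 1]].

Definition sys_eq1 (lam mu al a : R) : Prop :=
  2 * (a + al) * (3 - a * al - a - al) * (3 - a * al + a + al)
    + (lam - mu) * (a - al) ^+ 3 = 0.

Definition sys_eq2 (lam mu al a : R) : Prop :=
  (lam + mu) ^+ 2 * (a - al) ^+ 6 =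
    4 * (3 + a * al) ^+ 3 * (1 - a * al) * (2 + a + al) * (2 - a - al).

Definition quadBb (al a x : R) : R :=
  x ^+ 2 + (a + al) * x + (a - al) ^+ 2 / (1 - a * al) - 3.

Definition coefA (bt al a b : R) : R :=
  (1 - bt) * (1 - al) * (1 - a) * (1 - b) / 4.
Definition coefB (bt al a b : R) : R :=
  (1 + bt) * (1 + al) * (1 + a) * (1 + b) / 4.
Definition coefh (al a : R) : R :=
  (a + al) * (2 * a * al - (a - al) ^+ 2 / (1 - a * al)) / 4.

Definition Hfun (bt al a b : R) (z : R) : R :=
  coefh al a + z + coefA bt al a b * z / (1 - z) + coefB bt al a b * z / (1 + z).

Definition Gfun (bt al a b : R) (z : R) : R :=
  Hfun bt al a b z / Hfun bt al a b a.

End Defs.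

(* Main.v *)
Require Import Defs.
From HB Require Import structures.
From mathcomp Require Import all_boot all_order all_algebra.
From mathcomp Require Import all_classical all_reals all_analysis.
Import Order.TTheory GRing.Theory Num.Theory.
Import numFieldNormedType.Exports.
Local Open Scope classical_set_scope.
Local Open Scope ring_scope.

From mathcomp Require Import ring lra.
Set Implicit Arguments. Unset Strict Implicit.
Lemma canc (R : realType) (u v : R) : u != 0 -> u * v = 0 -> v = 0.
Proof. by move=> u0 /eqP; rewrite mulf_eq0 (negbTE u0) /= => /eqP. Qed.

Lemma nsub0 (R : realType) (x y : R) : x != y -> x - y != 0.
Proof. by rewrite subr_eq0. Qed.

Lemma cubic0 (R : realType) (d3 d2 d1 d0 x1 x2 x3 x4 : R) :
  x1 != x2 -> x1 != x3 -> x1 != x4 -> x2 != x3 -> x2 != x4 -> x3 != x4 ->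
  d3 * x1 ^+ 3 + d2 * x1 ^+ 2 + d1 * x1 + d0 = 0 ->
  d3 * x2 ^+ 3 + d2 * x2 ^+ 2 + d1 * x2 + d0 = 0 ->
  d3 * x3 ^+ 3 + d2 * x3 ^+ 2 + d1 * x3 + d0 = 0 ->
  d3 * x4 ^+ 3 + d2 * x4 ^+ 2 + d1 * x4 + d0 = 0 ->
  [/\ d3 = 0, d2 = 0, d1 = 0 & d0 = 0].
Proof.
move=> n12 n13 n14 n23 n24 n34 f1 f2 f3 f4.
pose g x y := d3 * (x ^+ 2 + x * y + y ^+ 2) + d2 * (x + y) + d1.
have gP x y : d3 * x ^+ 3 + d2 * x ^+ 2 + d1 * x + d0 = 0 ->
    d3 * y ^+ 3 + d2 * y ^+ 2 + d1 * y + d0 = 0 -> x != y -> g x y = 0.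
  move=> fx fy nxy; apply: (canc (nsub0 nxy)).
  have -> : (x - y) * g x y = (d3 * x ^+ 3 + d2 * x ^+ 2 + d1 * x + d0) -
     (d3 * y ^+ 3 + d2 * y ^+ 2 + d1 * y + d0) by rewrite /g; ring.
  by rewrite fx fy subr0.
pose k x y z := d3 * (x + y + z) + d2.
have kP x y z : g x y = 0 -> g x z = 0 -> y != z -> k x y z = 0.
  move=> gy gz nyz; apply: (canc (nsub0 nyz)).
  have -> : (y - z) * k x y z = g x y - g x z by rewrite /k /g; ring.
  by rewrite gy gz subr0.
have k3 := kP _ _ _ (gP _ _ f1 f2 n12) (gP _ _ f1 f3 n13) n23.
have k4 := kP _ _ _ (gP _ _ f1 f2 n12) (gP _ _ f1 f4 n14) n24.
have e3 : d3 = 0.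
  apply: (canc (nsub0 n34)).
  have -> : (x3 - x4) * d3 = k x1 x2 x3 - k x1 x2 x4 by rewrite /k; ring.
  by rewrite k3 k4 subr0.
have e2 : d2 = 0 by move: k3; rewrite /k e3 mul0r add0r.
have e1 : d1 = 0 by move: (gP _ _ f1 f2 n12); rewrite /g e3 e2 !mul0r !add0r.
split => //. by move: f1; rewrite e3 e2 e1 !mul0r !add0r.
Qed.

Definition Nq (R : realType) (C D r : R) := (1 - r ^+ 2) ^+ 2 + C * (1 + r) ^+ 2 + D * (1 - r) ^+ 2.

Lemma crit (R : realType) (C D bt al a b : R) :
  bt < al -> al < a -> a < b -> 1 - a * al != 0 ->
  Nq C D bt = 0 -> Nq C D al = 0 -> Nq C D a = 0 -> Nq C D b = 0 ->
  [/\ b = - (bt + al + a), C = Defs.coefA bt al a b, D = Defs.coefB bt al a b &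
      bt * b = (a - al) ^+ 2 / (1 - a * al) - 3].
Proof.
move=> h1 h2 h3 hd n1 n2 n3 n4.
pose e1 := bt + al + a + b.
pose e2 := bt * al + bt * a + bt * b + al * a + al * b + a * b.
pose e3 := bt * al * a + bt * al * b + bt * a * b + al * a * b.
pose e4 := bt * al * a * b.
have fP r : Nq C D r = 0 -> (r - bt) * (r - al) * (r - a) * (r - b) = 0 ->
  e1 * r ^+ 3 + (C + D - 2 - e2) * r ^+ 2 + (2 * C - 2 * D + e3) * r + (1 + C + D - e4) = 0.
  move=> hn hp.
  have -> : e1 * r ^+ 3 + (C + D - 2 - e2) * r ^+ 2 + (2 * C - 2 * D + e3) * r + (1 + C + D - e4)
     = Nq C D r - (r - bt) * (r - al) * (r - a) * (r - b) by rewrite /Nq /e1 /e2 /e3 /e4; ring.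
  by rewrite hn hp subr0.
have ne (x y : R) : x < y -> x != y by move=> hxy; rewrite lt_eqF.
have [E1 E2 E3 E4] := cubic0 (ne _ _ h1) (ne _ _ (lt_trans h1 h2)) (ne _ _ (lt_trans h1 (lt_trans h2 h3)))
  (ne _ _ h2) (ne _ _ (lt_trans h2 h3)) (ne _ _ h3)
  (fP _ n1 ltac:(ring)) (fP _ n2 ltac:(ring)) (fP _ n3 ltac:(ring)) (fP _ n4 ltac:(ring)).
have hb : b = - (bt + al + a) by move: E1; rewrite /e1; lra.
move: E2 E3 E4; rewrite /e2 /e3 /e4 => E2 E3 E4.
split => //.
- rewrite /Defs.coefA. move: E2 E3 E4. lra.
- rewrite /Defs.coefB. move: E2 E3 E4. lra.
have hp : bt * b * (1 - a * al) = (a + al) ^+ 2 - a * al - 3.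
  have : bt * b * (1 - a * al) - ((a + al) ^+ 2 - a * al - 3) =
      - (bt * al * a * b - (bt * al + bt * a + bt * b + al * a + al * b + a * b) - 3).
    rewrite hb; ring.
  move=> hE; apply/eqP; rewrite -subr_eq0 hE; apply/eqP. move: E2 E4; lra.
have -> : bt * b = bt * b * (1 - a * al) / (1 - a * al) by field.
rewrite hp. field. exact: hd.
Qed.

Ltac nz := repeat (apply/andP; split); apply/eqP => ?; lra.

Lemma Hvals (R : realType) (bt al a b : R) :
  bt < -1 -> -1 < al -> al < a -> a < 1 -> 1 < b ->
  b = - (bt + al + a) -> bt * b = (a - al) ^+ 2 / (1 - a * al) - 3 ->
  [/\ Hfun bt al a b a + Hfun bt al a b al = 0,
      Hfun bt al a b a - Hfun bt al a b al = (a - al) ^+ 3 / (2 * (1 - a * al)),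
      Hfun bt al a b b - Hfun bt al a b bt = (b - bt) * (3 + a * al) / 2 &
      Hfun bt al a b b + Hfun bt al a b bt =
        (a + al) * (a * al + (a - al) ^+ 2 / (1 - a * al) - 9) / 2].
Proof.
move=> h1 h2 h3 h4 h5 hb hp.
have hpi : 0 < 1 - a * al by nra.
have e1 : Hfun bt al a b a + Hfun bt al a b al =
   2 * Defs.coefh al a + (a + al) * (3 + bt * b - 2 * (a * al)) / 2.
  rewrite /Hfun /Defs.coefA /Defs.coefB. move: hb h5 => -> h5. field. nz.
have e2 : Hfun bt al a b a - Hfun bt al a b al = (a - al) * (3 + bt * b) / 2.
  rewrite /Hfun /Defs.coefA /Defs.coefB. move: hb h5 => -> h5. field. nz.
have e3 : Hfun bt al a b b - Hfun bt al a b bt = (b - bt) * (3 + a * al) / 2.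
  rewrite /Hfun /Defs.coefA /Defs.coefB. field. nz.
have e4 : Hfun bt al a b b + Hfun bt al a b bt =
   2 * Defs.coefh al a - (a + al) + (a + al) * (2 * (bt * b) - 1 - a * al) / 2.
  rewrite /Hfun /Defs.coefA /Defs.coefB. move: hb h5 => -> h5. field. nz.
split => //.
- rewrite e1 hp /Defs.coefh. field. nz.
- rewrite e2 hp. field. nz.
- rewrite e4 hp /Defs.coefh. field. nz.
Qed.

Lemma quad_rel (R : realType) (bt al a b : R) : 1 - a * al != 0 ->
  quadBb al a bt = 0 -> quadBb al a b = 0 -> bt != b ->
  b = - (bt + al + a) /\ bt * b = (a - al) ^+ 2 / (1 - a * al) - 3.
Proof.
rewrite /quadBb => hd q1 q2 nb.
have hs : bt + b + (a + al) = 0.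
  apply: (canc (nsub0 nb)).
  have -> : (bt - b) * (bt + b + (a + al)) =
     (bt ^+ 2 + (a + al) * bt + (a - al) ^+ 2 / (1 - a * al) - 3) -
     (b ^+ 2 + (a + al) * b + (a - al) ^+ 2 / (1 - a * al) - 3) by ring.
  by rewrite q1 q2 subr0.
have hb : b = - (bt + al + a) by lra.
split => //.
move: q1; rewrite hb. nra.
Qed.

Lemma quad_ex (R : realType) (al a : R) : -1 < al -> al < a -> a < 1 ->
  exists bt b : R, [/\ bt < -1, 1 < b, quadBb al a bt = 0 & quadBb al a b = 0].
Proof.
move=> h1 h2 h3.
have hpi : 0 < 1 - a * al by nra.
set Dp := (a - al) ^+ 2 / (1 - a * al).
have hD1 : Dp < 2 - (a + al).
  rewrite /Dp ltr_pdivrMr //.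
  have : 0 < (1 - a) * (1 - al) * (2 + (a + al)).
    apply: mulr_gt0; [apply: mulr_gt0|]; lra.
  have -> : (1 - a) * (1 - al) * (2 + (a + al)) = (2 - (a + al)) * (1 - a * al) - (a - al) ^+ 2 by ring.
  lra.
have hD2 : Dp < 2 + (a + al).
  rewrite /Dp ltr_pdivrMr //.
  have : 0 < (1 + a) * (1 + al) * (2 - (a + al)).
    apply: mulr_gt0; [apply: mulr_gt0|]; lra.
  have -> : (1 + a) * (1 + al) * (2 - (a + al)) = (2 + (a + al)) * (1 - a * al) - (a - al) ^+ 2 by ring.
  lra.
set Dl := (a + al) ^+ 2 - 4 * (Dp - 3).
have hDl : 0 <= Dl by rewrite /Dl; nra.
set s := Num.sqrt Dl.
have s0 : 0 <= s := sqrtr_ge0 Dl.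
have s2 : s ^+ 2 = Dl := sqr_sqrtr hDl.
exists ((- (a + al) - s) / 2), ((- (a + al) + s) / 2).
have q x : quadBb al a x = x ^+ 2 + (a + al) * x + (Dp - 3) by rewrite /quadBb /Dp; ring.
split.
- suff : 2 - (a + al) < s by lra.
  rewrite /Dl in s2. nra.
- suff : 2 + (a + al) < s by lra.
  rewrite /Dl in s2. nra.
- rewrite q. have : s ^+ 2 = Dl by []. rewrite /Dl => e. 
  have -> : ((- (a + al) - s) / 2) ^+ 2 + (a + al) * ((- (a + al) - s) / 2) + (Dp - 3)
     = (s ^+ 2 - ((a + al) ^+ 2 - 4 * (Dp - 3))) / 4 by field.
  by rewrite e subrr mul0r.
- rewrite q. have : s ^+ 2 = Dl by []. rewrite /Dl => e. 
  have -> : ((- (a + al) + s) / 2) ^+ 2 + (a + al) * ((- (a + al) + s) / 2) + (Dp - 3)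
     = (s ^+ 2 - ((a + al) ^+ 2 - 4 * (Dp - 3))) / 4 by field.
  by rewrite e subrr mul0r.
Qed.
Lemma derF (R : realType) (k m C D x : R) : x != 1 -> x != -1 ->
  is_derive x (1:R) (fun y => k * (m + y + C * y / (1 - y) + D * y / (1 + y)))
     (k * (1 + C / (1 - x) ^+ 2 + D / (1 + x) ^+ 2)).
Proof.
move=> h1 h2.
have n1 : 1 - x != 0 by rewrite subr_eq0 eq_sym.
have n2 : 1 + x != 0 by rewrite addrC -(opprK 1) subr_eq0.
have d1 : is_derive x (1:R) (fun y : R => (1 - y)^-1) (- (1 - x) ^- 2 *: (-1)).
  apply: is_deriveV => //.
  have H := is_deriveB (is_derive_cst (1:R) x 1) (is_derive_id x 1).
  rewrite sub0r in H. exact: H.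
have d2 : is_derive x (1:R) (fun y : R => (1 + y)^-1) (- (1 + x) ^- 2 *: 1).
  apply: is_deriveV => //.
  have H := is_deriveD (is_derive_cst (1:R) x 1) (is_derive_id x 1).
  rewrite add0r in H. exact: H.
have dC := is_deriveM (is_deriveZ C (is_derive_id x (1:R))) d1.
have dD := is_deriveM (is_deriveZ D (is_derive_id x (1:R))) d2.
have dm := is_deriveD (is_derive_cst m x (1:R)) (is_derive_id x (1:R)).
have := is_deriveZ k (is_deriveD (is_deriveD dm dC) dD).
move=> H; apply: (is_derive_eq (near_eq_is_derive _ H)). apply: filterE => y /=. by [].
rewrite /=. have E (a b : R) : a *: b = a * b by []. rewrite !E. field. by rewrite n1 n2. Qed.
Lemma limy (R : realType) (k h A B : R) :
  (fun z : R => k * (h / z + 1 + A / (1 - z) + B / (1 + z))) @ +oo --> k.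
Proof.
have w0 : (fun z : R => z^-1) @ +oo --> (0:R).
  apply/gtr0_cvgV0; first exact: nbhs_pinfty_gt.
  exact: cvg_id.
have hw : (fun z : R => h * z^-1) @ +oo --> h * 0 by apply: cvgMl_tmp.
have n1 : (0:R) - 1 != 0 by rewrite sub0r oppr_eq0 oner_eq0.
have n2 : (0:R) + 1 != 0 by rewrite add0r oner_eq0.
have hA : (fun z : R => A * z^-1 * (z^-1 - 1)^-1) @ +oo --> A * 0 * (0 - 1)^-1.
  apply: cvgM; first by apply: cvgMl_tmp.
  apply: cvgV => //. apply: cvgB => //. exact: cvg_cst.
have hB : (fun z : R => B * z^-1 * (z^-1 + 1)^-1) @ +oo --> B * 0 * (0 + 1)^-1.
  apply: cvgM; first by apply: cvgMl_tmp.
  apply: cvgV => //. apply: cvgD => //. exact: cvg_cst.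
have L : (fun z : R => k * (h * z^-1 + 1 + A * z^-1 * (z^-1 - 1)^-1 + B * z^-1 * (z^-1 + 1)^-1)) @ +oo --> k * (h * 0 + 1 + A * 0 * (0 - 1)^-1 + B * 0 * (0 + 1)^-1).
  apply: cvgMl_tmp. apply: cvgD => //. apply: cvgD => //. apply: cvgD => //. exact: cvg_cst.
move: L. rewrite !(mulr0, mul0r, addr0, add0r) mulr1 => L.
apply: cvg_trans L. apply: near_eq_cvg. near=> z.
have z1 : 1 < z by near: z; apply: nbhs_pinfty_gt.
have z0 : z != 0 by apply/eqP => e; lra.
have za : z - 1 != 0 by apply/eqP => e; lra.
have zb : 1 + z != 0 by apply/eqP => e; lra.
have zc : 1 - z != 0 by apply/eqP => e; lra.
rewrite /=. field. by rewrite z0 zb zc.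
Unshelve. all: by end_near.
Qed.

Lemma limNy (R : realType) (k h A B : R) :
  (fun z : R => k * (h / z + 1 + A / (1 - z) + B / (1 + z))) @ -oo --> k.
Proof.
apply/cvgNy_compNP. have L := @limy R k (- h) B A. apply: cvg_trans L.
apply: near_eq_cvg. near=> z. rewrite /= invrN mulrN mulNr opprK. ring.
Unshelve. all: by end_near.
Qed.

Lemma Nfact (R : realType) (bt al a b z : R) : b = - (bt + al + a) ->
  Nq (Defs.coefA bt al a b) (Defs.coefB bt al a b) z =
  (z - bt) * (z - al) * (z - a) * (z - b) +
  (z ^+ 2 - 1) * ((a + al) ^+ 2 - a * al - 3 - bt * b * (1 - a * al)) / 2.
Proof. move=> ->. rewrite /Nq /Defs.coefA /Defs.coefB. by field. Qed.

Lemma Gprop_of (R : realType) (lam mu bt al a b : R) :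
  1 < lam -> 1 < mu ->
  bt < -1 -> -1 < al -> al < a -> a < 1 -> 1 < b ->
  b = - (bt + al + a) -> bt * b = (a - al) ^+ 2 / (1 - a * al) - 3 ->
  sys_eq1 lam mu al a -> sys_eq2 lam mu al a ->
  0 < Hfun bt al a b a /\ Gtilde_prop lam mu (Gfun bt al a b).
Proof.
move=> hl hm h1 h2 h3 h4 h5 hb hp s1 s2.
have hpi : 0 < 1 - a * al by nra.
have [v1 v2 v3 v4] := Hvals h1 h2 h3 h4 h5 hb hp.
set Ha := Hfun bt al a b a in v1 v2 *.
set Hal := Hfun bt al a b al in v1 v2.
have haa : 0 < a - al by lra.
have eHa : Ha = (a - al) ^+ 3 / (4 * (1 - a * al)).
  have -> : Ha = ((Ha + Hal) + (Ha - Hal)) / 2 by field.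
  rewrite v1 v2; field; nz.
have Hpos : 0 < Ha.
  rewrite eHa; apply: divr_gt0; last lra.
  exact: exprn_gt0.
split => //.
have Hn : Ha != 0 by apply/eqP => e; lra.
set kap := Ha^-1.
have kpos : 0 < kap by rewrite invr_gt0.
have kn : kap != 0 by apply/eqP => e; lra.
set h := Defs.coefh al a.
set A := Defs.coefA bt al a b.
set B := Defs.coefB bt al a b.
have Aneg : A < 0.
  rewrite /A /Defs.coefA.
  have : 0 < (1 - bt) * (1 - al) * (1 - a) by apply: mulr_gt0; [apply: mulr_gt0|]; lra.
  move=> u; nra.
have Bneg : B < 0.
  rewrite /B /Defs.coefB.
  have : 0 < (1 + al) * (1 + a) * (1 + b) by apply: mulr_gt0; [apply: mulr_gt0|]; lra.
  move=> u; nra.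
have eH y : Hfun bt al a b y = h + y + A * y / (1 - y) + B * y / (1 + y) by [].
have eG y : Gfun bt al a b y = kap * (h + y + A * y / (1 - y) + B * y / (1 + y)).
  by rewrite /Gfun -/Ha eH mulrC.
pose P : {poly R} := ((kap%:P * 'X + (kap * (h - A + B))%:P) * 'X + (- (kap * (1 + A + B)))%:P) * 'X + (- (kap * h))%:P.
pose Q : {poly R} := ('X - 1%:P) * ('X - (-1)%:P).
have hPx x : P.[x] = ((kap * x + kap * (h - A + B)) * x - kap * (1 + A + B)) * x - kap * h.
  by rewrite /P !hornerMXaddC hornerC.
have hQx x : Q.[x] = (x - 1) * (x + 1).
  by rewrite /Q hornerM !hornerXsubC opprK.
exists P, Q; split.
- split.
  + have e1 : size (kap%:P * 'X + (kap * (h - A + B))%:P) = 2%N.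
      by rewrite size_MXaddC polyC_eq0 (negbTE kn) /= size_polyC kn.
    have e2 : size ((kap%:P * 'X + (kap * (h - A + B))%:P) * 'X + (- (kap * (1 + A + B)))%:P) = 3%N.
      have nz1 : kap%:P * 'X + (kap * (h - A + B))%:P != 0 by rewrite -size_poly_eq0 e1.
      by rewrite size_MXaddC (negbTE nz1) /= e1.
    have nz2 : (kap%:P * 'X + (kap * (h - A + B))%:P) * 'X + (- (kap * (1 + A + B)))%:P != 0 by rewrite -size_poly_eq0 e2.
    by rewrite /P size_MXaddC (negbTE nz2) /= e2.
  + rewrite /Q size_mul ?size_XsubC //; apply/eqP => e;
     have := size_XsubC (1:R); have := size_XsubC (-1:R); rewrite e size_poly0 //.
  + rewrite /Q coprimepMr !coprimep_XsubC !rootE !hPx.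
    apply/andP; split; apply/eqP => e; nra.
  + move=> x; rewrite rootE hQx => hx.
    have x1 : x != 1 by apply: contra hx => /eqP ->; rewrite subrr mul0r.
    have x2 : x != -1 by apply: contra hx => /eqP ->; rewrite addNr mulr0.
    have n1 : 1 - x != 0 by apply: contra x1; rewrite subr_eq0 eq_sym.
    have n2 : 1 + x != 0 by apply: contra x2; rewrite addrC addr_eq0.
    have m1 : x - 1 != 0 by rewrite subr_eq0.
    have m2 : x + 1 != 0 by rewrite addrC.
    rewrite eG hPx. field. by rewrite m1 m2 n1.
- by split; rewrite rootE hQx ?subrr ?addNr ?mul0r ?mulr0.
- exists kap; split => //; split.
  + have L := @limy R kap h A B; apply: cvg_trans L. apply: near_eq_cvg. near=> z.
    have z1 : 1 < z by near: z; apply: nbhs_pinfty_gt.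
    have z0 : z != 0 by apply/eqP => e; lra.
    have zb : 1 + z != 0 by apply/eqP => e; lra.
    have zc : 1 - z != 0 by apply/eqP => e; lra.
    rewrite /= eG. field. by rewrite z0 zb zc.
  + have L := @limNy R kap h A B; apply: cvg_trans L. apply: near_eq_cvg. near=> z.
    have z1 : z < -1 by near: z; apply: nbhs_ninfty_lt.
    have z0 : z != 0 by apply/eqP => e; lra.
    have zb : 1 + z != 0 by apply/eqP => e; lra.
    have zc : 1 - z != 0 by apply/eqP => e; lra.
    rewrite /= eG. field. by rewrite z0 zb zc.
- have hq : (a + al) ^+ 2 - a * al - 3 - bt * b * (1 - a * al) = 0.
    rewrite hp; field; nz.
  have hN r : (r - bt) * (r - al) * (r - a) * (r - b) = 0 -> Nq A B r = 0.
    by move=> hr; rewrite /A /B Nfact // hq hr mulr0 mul0r addr0.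
  have dG r : r != 1 -> r != -1 -> Nq A B r = 0 -> is_derive r (1:R) (Gfun bt al a b) 0.
    move=> r1 r2 hNr.
    have n1 : 1 - r != 0 by apply: contra r1; rewrite subr_eq0 eq_sym.
    have n2 : 1 + r != 0 by apply: contra r2; rewrite addrC addr_eq0.
    have D := derF kap h A B r1 r2.
    apply: (is_derive_eq (near_eq_is_derive _ D)).
      by apply: filterE => y; rewrite /= eG.
    have -> : 1 + A / (1 - r) ^+ 2 + B / (1 + r) ^+ 2 = Nq A B r / ((1 - r) ^+ 2 * (1 + r) ^+ 2).
      by rewrite /Nq; field; rewrite n1 n2.
    by rewrite hNr mul0r mulr0.
  have ne (x y : R) : x < y -> x != y by move=> hxy; rewrite lt_eqF.
  have nf (x y : R) : y < x -> x != y by move=> hxy; rewrite gt_eqF.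
  exists bt, al, a, b; split; [split => // | split; [split|]].
  + apply: dG; [apply: ne; lra | apply: ne; lra | apply: hN; ring].
  + apply: dG; [apply: ne; lra | apply: nf; lra | apply: hN; ring].
  + apply: dG; [apply: ne; lra | apply: nf; lra | apply: hN; ring].
  + apply: dG; [apply: nf; lra | apply: nf; lra | apply: hN; ring].
  + have eG2 y : Gfun bt al a b y = Hfun bt al a b y / Ha by [].
    have han : a - al != 0 by apply/eqP => e; lra.
    have hpn : 1 - a * al != 0 by apply/eqP => e; lra.
    have elm : lam - mu = - (2 * (a + al) * (3 - a * al - a - al) * (3 - a * al + a + al)) / (a - al) ^+ 3.
      have -> : lam - mu = ((lam - mu) * (a - al) ^+ 3) / (a - al) ^+ 3 by field.
      have -> : (lam - mu) * (a - al) ^+ 3 = - (2 * (a + al) * (3 - a * al - a - al) * (3 - a * al + a + al)).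
        by move: s1; rewrite /sys_eq1; lra.
      by [].
    have esum : Gfun bt al a b b + Gfun bt al a b bt = lam - mu.
      rewrite !eG2 -mulrDl v4 elm eHa. field. by rewrite han hpn.
    have elp : (lam + mu) ^+ 2 = 4 * (3 + a * al) ^+ 3 * (1 - a * al) * (2 + a + al) * (2 - a - al) / (a - al) ^+ 6.
      rewrite -s2. field. by rewrite han.
    have eb2 : (b - bt) ^+ 2 = (a + al) ^+ 2 - 4 * ((a - al) ^+ 2 / (1 - a * al) - 3).
      have -> : (b - bt) ^+ 2 = (b + bt) ^+ 2 - 4 * (bt * b) by ring.
      by rewrite hp hb; congr (_ - _); ring.
    have edif : Gfun bt al a b b - Gfun bt al a b bt = (b - bt) * (3 + a * al) / 2 / Ha.
      by rewrite !eG2 -mulrBl v3.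
    have dpos : 0 < Gfun bt al a b b - Gfun bt al a b bt.
      rewrite edif; apply: divr_gt0 => //; apply: divr_gt0; last lra.
      apply: mulr_gt0; nra.
    have esq : (Gfun bt al a b b - Gfun bt al a b bt) ^+ 2 = (lam + mu) ^+ 2.
      rewrite edif elp.
      have -> : ((b - bt) * (3 + a * al) / 2 / Ha) ^+ 2 = (b - bt) ^+ 2 * ((3 + a * al) ^+ 2 / 4 / Ha ^+ 2) by field.
      rewrite eb2 eHa. field. by rewrite han hpn.
    have ediff : Gfun bt al a b b - Gfun bt al a b bt = lam + mu.
      set x := Gfun bt al a b b - Gfun bt al a b bt in dpos esq *.
      have xy : x + (lam + mu) != 0 by apply/eqP => e; lra.
      apply/eqP; rewrite -subr_eq0; apply/eqP; apply: (canc xy).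
      have -> : (x + (lam + mu)) * (x - (lam + mu)) = x ^+ 2 - (lam + mu) ^+ 2 by ring.
      by rewrite esq subrr.
    split.
    * move: esum ediff; lra.
    * move: esum ediff; lra.
    * have eal : Hfun bt al a b al = - Ha by rewrite -/Hal; lra.
      rewrite eG2 eal. field. exact: Hn.
    * by rewrite eG2 divff.
Unshelve. all: by end_near.
Qed.

Lemma coef3 (R : realType) (p : {poly R}) (x : R) : size p = 4%N ->
  p.[x] = p`_0 + p`_1 * x + p`_2 * x ^+ 2 + p`_3 * x ^+ 3.
Proof.
move=> sp; rewrite horner_coef sp !big_ord_recr big_ord0 /=.
by rewrite add0r expr0 mulr1 expr1.
Qed.

Lemma coef2 (R : realType) (p : {poly R}) (x : R) : size p = 3%N ->
  p.[x] = p`_0 + p`_1 * x + p`_2 * x ^+ 2.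
Proof.
move=> sp; rewrite horner_coef sp !big_ord_recr big_ord0 /=.
by rewrite add0r expr0 mulr1 expr1.
Qed.

Lemma lead_nz (R : realType) (p : {poly R}) n : size p = n.+1 -> p`_n != 0.
Proof.
move=> sp; have : lead_coef p != 0.
  by rewrite lead_coef_eq0 -size_poly_eq0 sp.
by rewrite /lead_coef sp.
Qed.

Lemma near_neq (R : realType) (r c : R) : r != c -> \forall y \near r, y != c.
Proof. move=> hr; have := open_neq (y:=c); rewrite openE; apply. exact: hr. Qed.

Lemma part1 (R : realType) (lam mu : R) (Gt : R -> R) : Gtilde_prop lam mu Gt ->
  exists al a : R, [/\ -1 < al, al < a, a < 1, sys_eq1 lam mu al a & sys_eq2 lam mu al a].
Proof.
case=> P [Q [hr [rQm rQp] _ hx]].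
case: hr => sP sQ _ hPQ.
case: hx => bt [al [a [b [ho [hd hv]]]]].
case: ho => o1 o2 o3 o4 o5; case: hd => d1 d2 d3 d4; case: hv => v1 v2 v3 v4.
exists al, a.
have q2n := @lead_nz R Q 2 sQ.
have p3n := @lead_nz R P 3 sP.
have eQ1 : Q.[1] = 0 by apply/eqP.
have eQm : Q.[-1] = 0 by apply/eqP.
rewrite !coef2 // in eQ1 eQm.
have hQ x : Q.[x] = Q`_2 * (x ^+ 2 - 1).
  move: eQ1 eQm. rewrite expr1n sqrrN expr1n !mulr1 mulrN1 => e1 e2.
  have f1 : Q`_1 = 0 by lra.
  have f0 : Q`_0 = - Q`_2 by lra.
  rewrite coef2 // f1 f0. ring.
clear eQ1 eQm.
set q2 := Q`_2 in q2n hQ.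
pose k : R := P`_3 / q2.
pose m : R := - P`_0 / P`_3.
pose C : R := (- P`_1 / P`_3 - 1 - (P`_0 + P`_2) / P`_3) / 2.
pose D : R := (- P`_1 / P`_3 - 1 + (P`_0 + P`_2) / P`_3) / 2.
have kn : k != 0 by rewrite /k mulf_neq0 // invr_eq0.
have hF (y : R) : y != 1 -> y != -1 -> Gt y = k * (m + y + C * y / (1 - y) + D * y / (1 + y)).
  move=> y1 y2.
  have n1 : 1 - y != 0 by apply: contra y1; rewrite subr_eq0 eq_sym.
  have n2 : 1 + y != 0 by apply: contra y2; rewrite addrC addr_eq0.
  have n3 : y ^+ 2 - 1 != 0.
    have -> : y ^+ 2 - 1 = - ((1 - y) * (1 + y)) by ring.
    by rewrite oppr_eq0 mulf_neq0.
  rewrite hPQ; last by rewrite rootE hQ mulf_neq0.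
  rewrite coef3 // hQ /k /m /C /D. field.
  by rewrite n1 n2 n3 q2n p3n.
have hD (r : R) : r != 1 -> r != -1 -> is_derive r (1:R) Gt 0 -> Nq C D r = 0.
  move=> r1 r2 dr.
  have n1 : 1 - r != 0 by apply: contra r1; rewrite subr_eq0 eq_sym.
  have n2 : 1 + r != 0 by apply: contra r2; rewrite addrC addr_eq0.
  have dF : is_derive r (1:R) (fun y => k * (m + y + C * y / (1 - y) + D * y / (1 + y))) 0.
    apply: (near_eq_is_derive _ dr).
    by apply: filterS2 (near_neq r1) (near_neq r2) => y y1 y2; exact: hF.
  have D2 := derF k m C D r1 r2.
  case: dF => _ e0; case: D2 => _ e1. rewrite e0 in e1.
  have e2 := canc kn (esym e1).
  have -> : Nq C D r = (1 - r) ^+ 2 * (1 + r) ^+ 2 * (1 + C / (1 - r) ^+ 2 + D / (1 + r) ^+ 2).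
    by rewrite /Nq; field; rewrite n1 n2.
  by rewrite e2 mulr0.
clearbody k m C D q2.
clear sP sQ.
have ne (x y : R) : x < y -> x != y by move=> hxy; rewrite lt_eqF.
have nf (x y : R) : y < x -> x != y by move=> hxy; rewrite gt_eqF.
have hpi : 0 < 1 - a * al by nra.
have hpn : 1 - a * al != 0 by apply/eqP => e; lra.
have han : a - al != 0 by apply/eqP => e; lra.
have btal : bt < al by lra.
have ab : a < b by lra.
have N1 : Nq C D bt = 0 by apply: hD d1; [apply: ne | apply: ne]; lra.
have N2 : Nq C D al = 0 by apply: hD d2; [apply: ne | apply: nf]; lra.
have N3 : Nq C D a = 0 by apply: hD d3; [apply: ne | apply: nf]; lra.
have N4 : Nq C D b = 0 by apply: hD d4; [apply: nf | apply: nf]; lra.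
have [hb eC eD hp] := crit btal o3 ab hpn N1 N2 N3 N4.
have [w1 w2 w3 w4] := Hvals o1 o2 o3 o4 o5 hb hp.
set d := m - Defs.coefh al a.
have eF (y : R) : y != 1 -> y != -1 -> Gt y = k * (Hfun bt al a b y + d).
  move=> y1 y2; rewrite hF // /Hfun -eC -eD /d; ring.
have g1 : k * (Hfun bt al a b bt + d) = - mu by rewrite -eF //; [apply: ne | apply: ne]; lra.
have g2 : k * (Hfun bt al a b al + d) = - 1 by rewrite -eF; [lra | apply: ne | apply: nf]; lra.
have g3 : k * (Hfun bt al a b a + d) = 1 by rewrite -eF //; [apply: ne | apply: nf]; lra.
have g4 : k * (Hfun bt al a b b + d) = lam by rewrite -eF //; [apply: nf | apply: nf]; lra.
set Hbt := Hfun bt al a b bt in w3 w4 g1.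
set Hal := Hfun bt al a b al in w1 w2 g2.
set Ha := Hfun bt al a b a in w1 w2 g3.
set Hb := Hfun bt al a b b in w3 w4 g4.
have k1 : k * (Ha + Hal) = 0 by rewrite w1 mulr0.
have kd : k * d = 0 by lra.
have kdiff : k * (Ha - Hal) = 2 by lra.
have ek : k = 4 * (1 - a * al) / (a - al) ^+ 3.
  move: kdiff; rewrite w2 => kdiff.
  have -> : k = k * ((a - al) ^+ 3 / (2 * (1 - a * al))) * (4 * (1 - a * al) / (a - al) ^+ 3) / 2.
    by field; rewrite ?han ?hpn.
  by rewrite kdiff; field; rewrite ?han ?hpn.
split => //.
- rewrite /sys_eq1.
  have -> : lam - mu = k * (Hb + Hbt) by lra.
  rewrite w4 ek. field; by rewrite ?han ?hpn.
- rewrite /sys_eq2.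
  have -> : lam + mu = k * (Hb - Hbt) by lra.
  rewrite w3.
  have eb2 : (b - bt) ^+ 2 = (a + al) ^+ 2 - 4 * ((a - al) ^+ 2 / (1 - a * al) - 3).
    have -> : (b - bt) ^+ 2 = (b + bt) ^+ 2 - 4 * (bt * b) by ring.
    by rewrite hp hb; congr (_ - _); ring.
  have -> : (k * ((b - bt) * (3 + a * al) / 2)) ^+ 2 = (b - bt) ^+ 2 * (k ^+ 2 * (3 + a * al) ^+ 2 / 4) by field.
  rewrite eb2 ek. field; by rewrite ?han ?hpn.
Qed.

Theorem lemma4p3 (R : realType) (lam mu : R) (hlam : 1 < lam) (hmu : 1 < mu)
  (Gt : R -> R) (hGt : Gtilde_prop lam mu Gt)
  (huniq : forall F : R -> R, Gtilde_prop lam mu F ->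
             forall x : R, x != 1 -> x != -1 -> F x = Gt x) :
  (* (i) *)
  (exists al a : R, [/\ -1 < al, al < a, a < 1,
                        sys_eq1 lam mu al a & sys_eq2 lam mu al a]) /\
  (* (ii) *)
  (forall al a : R, -1 < al -> al < a -> a < 1 ->
     sys_eq1 lam mu al a -> sys_eq2 lam mu al a ->
     (exists bt b : R, [/\ bt < -1, 1 < b, quadBb al a bt = 0 & quadBb al a b = 0]) /\
     (forall bt b : R, bt < -1 -> 1 < b -> quadBb al a bt = 0 -> quadBb al a b = 0 ->
        (* G = \widetilde G *)
        (forall x : R, x != 1 -> x != -1 -> Gfun bt al a b x = Gt x) /\
        (* H = \widetilde H = c \widetilde G *)
        (exists c : R, [/\ 0 < c,
            (fun z => c * Gt z / z) @ +oo%R --> (1:R),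
            (fun z => c * Gt z / z) @ -oo%R --> (1:R) &
            forall x : R, x != 1 -> x != -1 -> Hfun bt al a b x = c * Gt x]))).
Proof.
split; first exact: part1 hGt.
move=> al a h1 h2 h3 s1 s2; split; first exact: quad_ex.
move=> bt b hbt hb q1 q2.
have hpn : 1 - a * al != 0 by apply/eqP => e; nra.
have nbb : bt != b by rewrite lt_eqF //; lra.
have [eb ep] := quad_rel hpn q1 q2 nbb.
have [Hpos GP] := Gprop_of hlam hmu hbt h1 h2 h3 hb eb ep s1 s2.
have eq := huniq _ GP.
split; first exact: eq.
have Hn : Hfun bt al a b a != 0 by apply/eqP => e; lra.
exists (Hfun bt al a b a).
have eG y : Gfun bt al a b y = Hfun bt al a b y / Hfun bt al a b a by [].
move: Hn Hpos eG; set Ha := Hfun bt al a b a => Hn Hpos eG.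
split => //.
- have L := @limy R 1 (Defs.coefh al a) (Defs.coefA bt al a b) (Defs.coefB bt al a b).
  apply: cvg_trans L. apply: near_eq_cvg. near=> z.
  have z1 : 1 < z by near: z; apply: nbhs_pinfty_gt.
  have z0 : z != 0 by apply/eqP => e; lra.
  have zb : 1 + z != 0 by apply/eqP => e; lra.
  have zc : 1 - z != 0 by apply/eqP => e; lra.
  have za : z != 1 by apply/eqP => e; lra.
  have zd : z != -1 by apply/eqP => e; lra.
  rewrite /= -eq // eG /Hfun. field; by rewrite ?z0 ?zb ?zc ?Hn.
- have L := @limNy R 1 (Defs.coefh al a) (Defs.coefA bt al a b) (Defs.coefB bt al a b).
  apply: cvg_trans L. apply: near_eq_cvg. near=> z.
  have z1 : z < -1 by near: z; apply: nbhs_ninfty_lt.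
  have z0 : z != 0 by apply/eqP => e; lra.
  have zb : 1 + z != 0 by apply/eqP => e; lra.
  have zc : 1 - z != 0 by apply/eqP => e; lra.
  have za : z != 1 by apply/eqP => e; lra.
  have zd : z != -1 by apply/eqP => e; lra.
  rewrite /= -eq // eG /Hfun. field; by rewrite ?z0 ?zb ?zc ?Hn.
- move=> x x1 x2; rewrite -eq // eG. field. exact: Hn.
Unshelve. all: by end_near.
Qed.
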